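(* Let $R$ be a $*$-reducing ring and let $p,q\in R$ be projections. Then the following are equivalent: (1) $p(1-q)$ is MP invertible; (2) $p-q$ is MP invertible; (3) $(1-p)q$ is MP invertible.
   Context: $R$ is an associative ring with identity $1$ and an involution $a\mapsto a^*$ (satisfying $(a^* )^*=a$, $(a+b)^*=a^*+b^*$, $(ab)^*=b^*a^*$). $R$ is $*$-reducing if $a^*a=0$ implies $a=0$ for all $a\in R$. An element $a$ is MP invertible if there is $b$ with $aba=a$, $bab=b$, $(ab)^*=ab$, $(ba)^*=ba$; this $b$ is unique and written $a^{\dagger}$. A projection is an element $p$ with $p^2=p=p^*$. *)

(* Defs.v *)
From mathcomp Require Import all_boot all_algebra.
Set Implicit Arguments. Unset Strict Implicit. Unset Printing Implicit Defensive.
Import GRing.Theory.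
Local Open Scope ring_scope.

Definition involution (R : pzRingType) (star : R -> R) : Prop :=
  [/\ forall a, star (star a) = a,
      forall a b, star (a + b) = star a + star b &
      forall a b, star (a * b) = star b * star a].

Definition star_reducing (R : pzRingType) (star : R -> R) : Prop :=
  forall a, star a * a = 0 -> a = 0.

Definition is_MP_inverse (R : pzRingType) (star : R -> R) (a b : R) : Prop :=
  [/\ a * b * a = a, b * a * b = b, star (a * b) = a * b & star (b * a) = b * a].

Definition MP_invertible (R : pzRingType) (star : R -> R) (a : R) : Prop :=
  exists b, is_MP_inverse star a b.

Definition projection (R : pzRingType) (star : R -> R) (p : R) : Prop :=
  p * p = p /\ star p = p.

(* Main.v *)
Require Import Defs.
From mathcomp Require Import all_boot all_algebra.
Import GRing.Theory.
Set Implicit Arguments. Unset Strict Implicit.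
Local Open Scope ring_scope.

Lemma stK (R : pzRingType) (s : R -> R) : involution s -> forall a, s (s a) = a.
Proof. by case. Qed.
Lemma stD (R : pzRingType) (s : R -> R) : involution s -> forall a b, s (a + b) = s a + s b.
Proof. by case. Qed.
Lemma stM (R : pzRingType) (s : R -> R) : involution s -> forall a b, s (a * b) = s b * s a.
Proof. by case. Qed.
Lemma st0 (R : pzRingType) (s : R -> R) : involution s -> s 0 = 0.
Proof. move=> H; have h := stD H 0 0; rewrite addr0 in h.
by apply/(addrI (s 0)); rewrite -h addr0. Qed.
Lemma stN (R : pzRingType) (s : R -> R) : involution s -> forall a, s (- a) = - s a.
Proof. move=> H a; apply/eqP; rewrite -subr_eq0 opprK -stD // addNr st0 //. Qed.
Lemma stB (R : pzRingType) (s : R -> R) : involution s -> forall a b, s (a - b) = s a - s b.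
Proof. by move=> H a b; rewrite stD // stN. Qed.
Lemma st1 (R : pzRingType) (s : R -> R) : involution s -> s 1 = 1.
Proof. move=> H; have := stM H (s 1) 1; rewrite mulr1 !stK // mulr1 => h. by rewrite -h. Qed.

Definition GI (R : pzRingType) (s : R -> R) (h k : R) :=
  [/\ h * k = k * h, h * k * h = h, k * h * k = k & s k = k].

Lemma MP_star (R : pzRingType) (s : R -> R) : involution s -> forall a,
  MP_invertible s a -> MP_invertible s (s a).
Proof.
move=> H a [x [h1 h2 h3 h4]]; exists (s x); split.
- by rewrite -!stM // mulrA h1.
- by rewrite -!stM // mulrA h2.
- by rewrite -stM // h4.
- by rewrite -stM // h3.
Qed.

Lemma MP_opp (R : pzRingType) (s : R -> R) : involution s -> forall a,
  MP_invertible s a -> MP_invertible s (- a).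
Proof.
move=> H a [x [h1 h2 h3 h4]]; exists (- x); split; rewrite ?mulrNN ?mulrN ?mulNr ?opprK.
- by rewrite h1.
- by rewrite h2.
- by rewrite h3.
- by rewrite h4.
Qed.

Lemma L3a (R : pzRingType) (s : R -> R) : involution s -> forall a x,
  is_MP_inverse s a x -> GI s (s a * a) (x * s x).
Proof.
move=> H a x [h1 h2 h3 h4].
have e1 : a * x = s x * s a by rewrite -stM.
have e2 : x * a = s a * s x by rewrite -stM.
have e3 : s a * s x * s a = s a by rewrite -!stM // mulrA h1.
have e4 : s x * s a * s x = s x by rewrite -!stM // mulrA h2.
have hk : s a * a * (x * s x) = x * a.
  by rewrite mulrA -(mulrA _ a) e1 !mulrA e3 e2.
have kh : x * s x * (s a * a) = x * a.
  by rewrite mulrA -(mulrA x) -e1 !mulrA h2.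
split.
- by rewrite hk kh.
- by rewrite hk e2 mulrA e3.
- by rewrite kh mulrA h2.
- by rewrite stM // stK.
Qed.

Lemma L3b (R : pzRingType) (s : R -> R) : involution s -> star_reducing s ->
  forall a k, GI s (s a * a) k -> is_MP_inverse s a (k * s a).
Proof.
move=> H Hr a k [c1 c2 c3 c4].
have sh : s (s a * a) = s a * a by rewrite (stM H) (stK H).
have se : s (k * (s a * a)) = k * (s a * a) by rewrite (stM H) sh c4 c1.
have ae : a * (k * (s a * a)) = a.
  apply/eqP; rewrite -subr_eq0; apply/eqP; apply: Hr.
  have -> : a * (k * (s a * a)) - a = a * (k * (s a * a) - 1) by rewrite mulrBr mulr1.
  rewrite (stM H) -mulrA (mulrA (s a) a) mulrBr mulr1 (mulrA _ k) c2.
  by rewrite subrr !mulr0.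
split.
- by rewrite -!mulrA ae.
- by rewrite !mulrA -(mulrA k (s a) a) c3.
- by rewrite (stM H) (stM H) (stK H) c4 mulrA.
- by rewrite -mulrA (stM H) sh c4 c1.
Qed.

Lemma L2 (R : pzRingType) (h k t : R) : h * k = k * h -> h * k * h = h ->
  k * h * k = k -> t * h = h * t -> t * k = k * t.
Proof.
move=> c1 c2 c3 Ht.
have kk1 : k = k * k * h by rewrite -mulrA -c1 mulrA c3.
have kk2 : k = h * k * k by rewrite c1 c3.
have e1a : t * k = h * t * k * k by rewrite {1}kk2 !mulrA Ht.
have e1 : t * k = h * k * (t * k).
  by rewrite {2}e1a !mulrA c2 -e1a.
have hhk : h * (h * k) = h by rewrite c1 mulrA c2.
have e2a : k * t = k * k * t * h by rewrite {1}kk1 -!mulrA Ht.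
have e2 : k * t = k * t * (h * k).
  by rewrite {2}e2a -!mulrA hhk !mulrA -e2a.
rewrite e1 e2 [X in X * (t * k)]c1 -!mulrA (mulrA h t) -Ht -!mulrA.
done.
Qed.

Lemma GI_add (R : pzRingType) (s : R -> R) : involution s -> forall h1 h2 k1 k2,
  GI s h1 k1 -> GI s h2 k2 -> h1 * h2 = 0 -> h2 * h1 = 0 -> GI s (h1 + h2) (k1 + k2).
Proof.
move=> H h1 h2 k1 k2 [a1 a2 a3 a4] [b1 b2 b3 b4] z12 z21.
have kk1 : k1 = k1 * k1 * h1 by rewrite -mulrA -a1 mulrA a3.
have kk1' : k1 = h1 * k1 * k1 by rewrite a1 a3.
have kk2 : k2 = k2 * k2 * h2 by rewrite -mulrA -b1 mulrA b3.
have kk2' : k2 = h2 * k2 * k2 by rewrite b1 b3.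
have y1 : k1 * h2 = 0 by rewrite {1}kk1 -mulrA z12 mulr0.
have y2 : h2 * k1 = 0 by rewrite {1}kk1' !mulrA z21 !mul0r.
have y3 : k2 * h1 = 0 by rewrite {1}kk2 -mulrA z21 mulr0.
have y4 : h1 * k2 = 0 by rewrite {1}kk2' !mulrA z12 !mul0r.
have y5 : k1 * k2 = 0 by rewrite {1}kk2' !mulrA y1 !mul0r.
have y6 : k2 * k1 = 0 by rewrite {1}kk1' !mulrA y3 !mul0r.
split.
- rewrite !mulrDl !mulrDr y1 y2 y3 y4 !addr0 !add0r a1 b1 //.
- rewrite !mulrDl !mulrDr y2 y4 !addr0 !add0r ?mulrDl ?mulrDr.
  by rewrite -!mulrA y1 y3 !mulr0 !addr0 !add0r !mulrA a2 b2.
- rewrite !mulrDl !mulrDr y1 y3 !addr0 !add0r ?mulrDl ?mulrDr.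
  by rewrite -!mulrA ?y2 ?y4 ?y5 ?y6 !mulr0 !addr0 !add0r !mulrA a3 b3.
- by rewrite (stD H) a4 b4.
Qed.

Lemma transport (R : pzRingType) (s : R -> R) : involution s -> forall P Q k,
  P * P = P -> s P = P -> Q * Q = Q -> s Q = Q ->
  GI s (P - P * Q * P) k ->
  GI s (Q - Q * P * Q) ((Q + Q * k * Q) * (Q - Q * P * Q) * (Q + Q * k * Q)).
Proof.
move=> H P Q k PP sP QQ sQ.
set T := P - P * Q * P; set U := Q - Q * P * Q.
move=> [c1 c2 c3 c4].
have PT : P * T = T by rewrite /T mulrBr !mulrA PP.
have TP : T * P = T by rewrite /T mulrBl -!mulrA PP.
have QU : Q * U = U by rewrite /U mulrBr !mulrA QQ.
have UQ : U * Q = U by rewrite /U mulrBl -!mulrA QQ.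
have kk : k = T * k * k by rewrite c1 c3.
have kk' : k = k * k * T by rewrite -mulrA -c1 mulrA c3.
have Pk : P * k = k by rewrite {2}kk {1}kk !mulrA PT.
have kP : k * P = k by rewrite {2}kk' {1}kk' -!mulrA TP.
have PQP : P * Q * P = P - T by rewrite /T opprB addrC subrK.
have QPQ : Q * P * Q = Q - U by rewrite /U opprB addrC subrK.
have [e ed] : exists e, e = T * k by eexists.
have ek : k * T = e by rewrite ed c1.
have Pe : P * e = e by rewrite ed mulrA PT.
have eP : e * P = e by rewrite -ek -mulrA TP.
have eT : e * T = T by rewrite ed c2.
have Te : T * e = T by rewrite ed c1 mulrA c2.
have s1 : U * k = Q * e.
  rewrite /U mulrBl.
  have -> : Q * P * Q * k = Q * ((P * Q * P) * k) by rewrite -{1}Pk !mulrA.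
  rewrite PQP mulrBl Pk mulrBr -ed.
  by rewrite opprB addrC subrK.
have s2 : k * U = e * Q.
  rewrite /U mulrBr.
  have -> : k * (Q * P * Q) = (k * (P * Q * P)) * Q by rewrite -{1}kP !mulrA.
  rewrite PQP mulrBr kP ek mulrBl.
  by rewrite opprB addrC subrK.
have s3 : e * U = T * Q.
  rewrite /U mulrBr.
  have -> : e * (Q * P * Q) = (e * (P * Q * P)) * Q by rewrite -{1}eP !mulrA.
  rewrite PQP mulrBr eP eT mulrBl.
  by rewrite opprB addrC subrK.
have s4 : U * e = Q * T.
  rewrite /U mulrBl.
  have -> : Q * P * Q * e = Q * ((P * Q * P) * e) by rewrite -{1}Pe !mulrA.
  rewrite PQP mulrBl Pe Te mulrBr.
  by rewrite opprB addrC subrK.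
have ee : e * e = e by rewrite ed mulrA c2.
have eQe : e * Q * e = e - T.
  have -> : e * Q * e = e * (P * Q * P) * e by rewrite -{1}eP -{2}Pe !mulrA.
  by rewrite PQP mulrBr eP eT mulrBl ee Te.
have [f fd] : exists f, f = U + Q * e * Q by eexists.
have [m md] : exists m, m = Q + Q * k * Q by eexists.
have Um : U * m = f by rewrite md fd mulrDr UQ !mulrA UQ s1.
have mU : m * U = f by rewrite md fd mulrDl QU -(mulrA _ Q U) QU -mulrA s2 !mulrA.
have UPQ : U * P * Q = Q * T * Q.
  by rewrite /U /T !mulrBl !mulrBr !mulrBl !mulrA.
have UU : U * U = U - U * P * Q.
  by rewrite {2}/U mulrBr UQ !mulrA UQ.
have fU : f * U = U.
  have QeQU : Q * e * Q * U = Q * T * Q by rewrite -mulrA QU -mulrA s3 mulrA.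
  by rewrite fd mulrDl UU QeQU -UPQ subrK.
have fQ : f * Q = f by rewrite fd mulrDl UQ -mulrA QQ.
have fe : f * e = Q * e.
  by rewrite fd mulrDl s4 -mulrA -mulrA (mulrA e) eQe (mulrBr Q e T) addrC subrK.
have ff : f * f = f.
  by rewrite {2}fd mulrDr fU !mulrA fQ fe -fd.
have g1 : U * (m * U * m) = f by rewrite !mulrA Um fU Um.
have g2 : m * U * m * U = f by rewrite -mulrA mU ff.
rewrite -md.
split.
- by rewrite g1 g2.
- by rewrite g1 fU.
- have -> : m * U * m * U * (m * U * m) = m * (U * (m * U * m) * U * m) by rewrite !mulrA.
  by rewrite g1 fU Um -Um mulrA.
- have sm : s m = m by rewrite md (stD H) sQ !(stM H) sQ c4 mulrA.
  have sU : s U = U by rewrite /U (stB H) sQ !(stM H) sQ sP mulrA.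
  by rewrite !(stM H) sm sU mulrA.
Qed.

Lemma GI_proj (R : pzRingType) (s : R -> R) : involution s -> forall h k t,
  GI s h k -> t * t = t -> s t = t -> t * h = h * t -> GI s (t * h) (t * k).
Proof.
move=> H h k t [c1 c2 c3 c4] tt st th.
have tk : t * k = k * t by apply: (L2 c1 c2 c3); rewrite th.
have ht' : forall X, h * (t * X) = t * (h * X) by move=> X; rewrite !mulrA th.
have kt' : forall X, k * (t * X) = t * (k * X) by move=> X; rewrite !mulrA tk.
have tt' : forall X, t * (t * X) = t * X by move=> X; rewrite mulrA tt.
split.
- by rewrite -!mulrA ht' kt' !tt' c1.
- by rewrite -!mulrA !ht' !kt' !ht' !tt' (mulrA h k h) c2.
- by rewrite -!mulrA !ht' !kt' ?ht' !tt' (mulrA k h k) c3.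
- by rewrite (stM H) c4 st tk.
Qed.

Lemma Tc (R : pzRingType) (P Q : R) : Q * Q = Q -> Q - Q * (1 - P) * Q = Q * P * Q.
Proof. by move=> QQ; rewrite mulrBr mulr1 mulrBl QQ opprB addrC subrK. Qed.

Lemma proj_c (R : pzRingType) (s : R -> R) : involution s -> forall p,
  projection s p -> projection s (1 - p).
Proof.
move=> H p [pp sp]; split.
- by rewrite mulrBr mulr1 mulrBl mul1r pp subrr subr0.
- by rewrite (stB H) (st1 H) sp.
Qed.

Lemma p1p (R : pzRingType) (p : R) : p * p = p -> p * (1 - p) = 0.
Proof. by move=> pp; rewrite mulrBr mulr1 pp subrr. Qed.
Lemma p1p' (R : pzRingType) (p : R) : p * p = p -> (1 - p) * p = 0.
Proof. by move=> pp; rewrite mulrBl mul1r pp subrr. Qed.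

Lemma zid (V : zmodType) (p q A B C : V) :
  p - A - (B - q) = p - C + (q - A - (B - C)).
Proof.
rewrite !opprB -!addrA; congr (p + _).
by rewrite (addrCA (- C)) (addrCA (- C)) addKr addrCA.
Qed.

Lemma sq_id (R : pzRingType) (p q : R) : p * p = p -> q * q = q ->
  (p - q) * (p - q) = p * (1 - q) * p + (1 - p) * q * (1 - p).
Proof.
move=> pp qq.
rewrite mulrBl !mulrBr pp qq.
rewrite !mulr1 (mulrBl p) pp !(mulrBl q 1 p) !mul1r (mulrBl p q).
exact: zid.
Qed.

Lemma part1 (R : pzRingType) (s : R -> R) (H : involution s) (Hr : star_reducing s)
  (p q : R) (Hp : projection s p) (Hq : projection s q) :
  MP_invertible s (p * (1 - q)) <-> MP_invertible s (p - q).
Proof.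
have [pp sp] := Hp; have [qq sq] := Hq.
have [pp' sp'] := proj_c H Hp; have [qq' sq'] := proj_c H Hq.
have hsq := sq_id pp qq.
have sb : s (p - q) = p - q by rewrite (stB H) sp sq.
have sa : s (p * (1 - q)) = (1 - q) * p by rewrite (stM H) sp sq'.
have aa : p * (1 - q) * ((1 - q) * p) = p * (1 - q) * p.
  by rewrite mulrA -(mulrA p (1 - q) (1 - q)) qq'.
have z1 : p * (1 - q) * p * ((1 - p) * q * (1 - p)) = 0.
  by rewrite -!mulrA (mulrA p (1 - p)) (p1p pp) !mul0r !mulr0.
have z2 : (1 - p) * q * (1 - p) * (p * (1 - q) * p) = 0.
  by rewrite -!mulrA (mulrA (1 - p) p) (p1p' pp) !mul0r !mulr0.
split.
- move=> [x hx].
  have g1 := L3a H hx.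
  rewrite sa in g1.
  have e1 : (1 - q) * p * (p * (1 - q)) = (1 - q) - (1 - q) * (1 - p) * (1 - q).
    by rewrite Tc // mulrA -(mulrA _ p p) pp.
  rewrite e1 in g1.
  have g2 := transport H qq' sq' pp' sp' g1.
  rewrite Tc // in g2.
  have [y hy] := MP_star H (ex_intro _ x hx).
  have g3 := L3a H hy.
  rewrite (stK H) sa aa in g3.
  have g4 := GI_add H g3 g2 z1 z2.
  rewrite -hsq -{1}sb in g4.
  exact: (ex_intro _ _ (L3b H Hr g4)).
- move=> [x hx].
  have g1 := L3a H hx.
  rewrite sb hsq in g1.
  have ph : p * (p * (1 - q) * p + (1 - p) * q * (1 - p)) = p * (1 - q) * p.
    by rewrite mulrDr !mulrA pp (p1p pp) !mul0r addr0.
  have hp : (p * (1 - q) * p + (1 - p) * q * (1 - p)) * p = p * (1 - q) * p.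
    by rewrite mulrDl -!mulrA pp (p1p' pp) !mulr0 addr0 !mulrA.
  have g2 := GI_proj H g1 pp sp (etrans ph (esym hp)).
  rewrite ph -aa -sa -[X in GI _ (X * _)](stK H (p * (1 - q))) in g2.
  have := MP_star H (ex_intro _ _ (L3b H Hr g2)).
  by rewrite (stK H).
Qed.

Unset Implicit Arguments.
Theorem corollary2p8 (R : pzRingType) (star : R -> R)
  (Hinv : involution star) (Hred : star_reducing star) (p q : R)
  (Hp : projection star p) (Hq : projection star q) :
  (MP_invertible star (p * (1 - q)) <-> MP_invertible star (p - q)) /\
  (MP_invertible star (p - q) <-> MP_invertible star ((1 - p) * q)).
Proof.
split; first exact: part1.
have e : star ((1 - p) * q) = q * (1 - p).
  by rewrite (stM Hinv) (stB Hinv) (st1 Hinv) Hp.2 Hq.2.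
have := part1 Hinv Hred Hq Hp.
split.
- move=> /(MP_opp Hinv); rewrite opprB => /H.2; rewrite -e.
  by move=> /(MP_star Hinv); rewrite (stK Hinv).
- move=> /(MP_star Hinv); rewrite e => /H.1 /(MP_opp Hinv).
  by rewrite opprB.
Qed.
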